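(* Let $\Sigma$ be a finite alphabet. For every unranked ordered $\Sigma$-labeled tree $t$ with $|t|\ge 2$, we have $|\mathrm{dag}(t)| \le \frac12 |\mathrm{hdag}(t)|^2$.
   Context: An unranked tree over $\Sigma$ is a finite rooted tree with nodes labeled in $\Sigma$ and linearly ordered children (arbitrary finite number); $|t|$ is its number of edges. $\mathrm{dag}(t)$ is the minimal dag of $t$: its nodes are the distinct subtrees of $t$, and the node of a subtree $f(s_1,\dots,s_k)$ has $k$ ordered edges to the nodes of $s_1,\dots,s_k$; $|\mathrm{dag}(t)|$ is its number of edges. The first-child/next-sibling encoding $\mathrm{fcns}$ maps a sequence of unranked trees to a binary tree (optional left and right child at each node): $\mathrm{fcns}(\varepsilon)$ is empty and $\mathrm{fcns}(t_1\cdots t_n)=f(\mathrm{fcns}(u_1\cdots u_m),\mathrm{fcns}(t_2\cdots t_n))$ when $t_1=f(u_1,\dots,u_m)$. Hybrid dag: for each distinct subtree $s=f(s_1,\dots,s_k)$ of $t$ with $k\ge1$ introduce a fresh symbol $A_s$ and the height-one tree $\rho_s=f(\alpha_1,\dots,\alpha_k)$, where $\alpha_i$ is the label of $s_i$ if $s_i$ is a single node and $\alpha_i=A_{s_i}$ otherwise. Let $\rho'_s$ be $\rho_s$ with its root additionally marked by $A_s$. $\mathrm{hdag}(t)$ is the minimal dag of the forest of binary trees $\mathrm{fcns}(\rho'_s)$ (identical subtrees anywhere in the forest merged), and $|\mathrm{hdag}(t)|$ is its number of edges, not counting edges to absent children. *)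

(* Defs.v *)
From HB Require Import structures.
From mathcomp Require Import all_boot.

Set Implicit Arguments.
Unset Strict Implicit.
Unset Printing Implicit Defensive.

Inductive tree (A : Type) : Type := Node of A & seq (tree A).
Arguments Node {A}.

Definition label A (t : tree A) := let: Node a _ := t in a.
Definition children A (t : tree A) := let: Node _ ts := t in ts.

Definition tree_ind' (A : Type) (P : tree A -> Prop)
  (H : forall a ts, foldr (fun t acc => P t /\ acc) True ts -> P (Node a ts)) :
  forall t, P t :=
  fix F t := match t with
  | Node a ts => H a ts
      ((fix G (ts : seq (tree A)) : foldr (fun t acc => P t /\ acc) True ts :=
          match ts with [::] => I | t :: ts' => conj (F t) (G ts') end) ts)
  end.

Section TreeEq.
Variable A : eqType.

Fixpoint tree_eqb (t u : tree A) : bool :=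
  match t, u with
  | Node a ts, Node b us =>
      (a == b) &&
      (fix eqs (ts us : seq (tree A)) : bool :=
         match ts, us with
         | [::], [::] => true
         | t :: ts', u :: us' => tree_eqb t u && eqs ts' us'
         | _, _ => false
         end) ts us
  end.

Lemma tree_eqbP : Equality.axiom tree_eqb.
Proof.
move=> t u; apply: (iffP idP); last first.
  move=> <-; elim/tree_ind': t => a ts IH /=; rewrite eqxx /=.
  by elim: ts IH => [|t ts IHts] //= [-> /IHts].
elim/tree_ind': t u => a ts IH [b us] /= /andP[/eqP <- H]; congr Node.
elim: ts us IH H => [|t ts IHts] [|u us] //= [Ht IHrest] /andP[/Ht -> /(IHts _ IHrest) ->].
done.
Qed.

HB.instance Definition _ := hasDecEq.Build (tree A) tree_eqbP.
End TreeEq.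

(* |t| : number of edges *)
Fixpoint edges A (t : tree A) : nat :=
  let: Node _ ts := t in size ts + sumn (map (@edges A) ts).

Fixpoint subtrees A (t : tree A) : seq (tree A) :=
  let: Node _ ts := t in t :: flatten (map (@subtrees A) ts).

(* |dag(t)| : nodes are the distinct subtrees; the node of f(s_1..s_k) has k edges *)
Definition dag_size (A : eqType) (t : tree A) : nat :=
  sumn [seq size (children s) | s <- undup (subtrees t)].

Inductive btree (L : Type) : Type :=
| BEmpty : btree L
| BNode : L -> btree L -> btree L -> btree L.
Arguments BEmpty {L}.
Arguments BNode {L}.

Section BtreeEq.
Variable L : eqType.
Fixpoint btree_eqb (t u : btree L) : bool :=
  match t, u with
  | BEmpty, BEmpty => true
  | BNode a l r, BNode b l' r' => [&& a == b, btree_eqb l l' & btree_eqb r r']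
  | _, _ => false
  end.
Lemma btree_eqbP : Equality.axiom btree_eqb.
Proof.
move=> t u; apply: (iffP idP); last first.
  by move=> <-; elim: t => //= a l -> r ->; rewrite eqxx.
elim: t u => [|a l IHl r IHr] [|b l' r'] //= /and3P[/eqP <- /IHl <- /IHr <-].
done.
Qed.
HB.instance Definition _ := hasDecEq.Build (btree L) btree_eqbP.
End BtreeEq.

(* first-child / next-sibling encoding of a sequence of unranked trees *)
Fixpoint fcn A (t : tree A) (sib : btree A) : btree A :=
  let: Node f us := t in BNode f (foldr (@fcn A) BEmpty us) sib.
Definition fcns A (ts : seq (tree A)) : btree A := foldr (@fcn A) BEmpty ts.

Lemma fcns_nil A : fcns (A:=A) [::] = BEmpty. Proof. by []. Qed.
Lemma fcns_cons A (f : A) us ts :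
  fcns (Node f us :: ts) = BNode f (fcns us) (fcns ts).
Proof. by []. Qed.

Fixpoint bsubtrees L (t : btree L) : seq (btree L) :=
  match t with
  | BEmpty => [::]
  | BNode _ l r => t :: bsubtrees l ++ bsubtrees r
  end.

Definition bout (L : eqType) (t : btree L) : nat :=
  match t with
  | BEmpty => 0
  | BNode _ l r => (l != BEmpty) + (r != BEmpty)
  end.

(* size of the minimal dag of a forest of binary trees
   (identical subtrees anywhere in the forest merged) *)
Definition forest_dag_size (L : eqType) (F : seq (btree L)) : nat :=
  sumn [seq bout s | s <- undup (flatten (map (@bsubtrees L) F))].

(* Labels of the height-one trees rho'_s: the first component is
   a letter of Sigma (inl) or a nonterminal A_{s'} (inr s'), where the fresh
   symbol A_{s'} is identified with the subtree s' itself (so that distinct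
   subtrees get distinct symbols); the second component is the root marking:
   Some s for the root of rho'_s (marked by A_s), None otherwise. *)
Definition hlabel (A : eqType) := ((A + tree A) * option (tree A))%type.

Definition alpha (A : eqType) (s : tree A) : A + tree A :=
  if children s is [::] then inl (label s) else inr s.

Definition rho' (A : eqType) (s : tree A) : tree (hlabel A) :=
  Node (inl (label s), Some s)
       [seq Node (alpha u, None) [::] | u <- children s].

Definition hdag_forest (A : eqType) (t : tree A) : seq (btree (hlabel A)) :=
  [seq fcns [:: rho' s] | s <- undup (subtrees t) & 0 < size (children s)].

Definition hdag_size (A : eqType) (t : tree A) : nat :=
  forest_dag_size (hdag_forest t).

(* Main.v *)
Require Import Defs.
From mathcomp Require Import all_boot zify.

Lemma sum_sub (T : eqType) (f : T -> nat) (L M : seq T) :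
  uniq L -> {subset L <= M} ->
  sumn (map f L) <= sumn (map f (undup M)).
Proof.
move=> uL sLM.
rewrite -(perm_sumn (perm_map f (permEl (perm_filterC (mem L) (undup M))))).
rewrite map_cat sumn_cat.
have -> : sumn (map f [seq x <- undup M | mem L x]) = sumn (map f L).
  apply/perm_sumn/perm_map/uniq_perm; first exact/filter_uniq/undup_uniq.
    done.
  move=> x; rewrite mem_filter mem_undup; apply/andP/idP => [[]//|xL].
  by split=> //; apply: sLM.
exact: leq_addr.
Qed.


Fixpoint bsize {L : Type} (b : btree L) : nat :=
  match b with BNode _ l r => (bsize l + bsize r).+1 | BEmpty => 0 end.


Lemma bsub_le (L : eqType) (b c : btree L) : c \in bsubtrees b -> bsize c <= bsize b.
Proof.
elim: b => [|x l IHl r IHr] //=; rewrite inE mem_cat => /orP[/eqP->//|/orP[/IHl|/IHr]] /=; lia.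
Qed.

Definition ch {L : Type} (xs : seq L) : btree L :=
  foldr (fun x b => BNode x BEmpty b) BEmpty xs.

Definition isroot {A : eqType} (b : btree (hlabel A)) : bool :=
  if b is BNode (_, Some _) _ _ then true else false.

Lemma ch_props (A : eqType) (xs : seq (hlabel A)) :
  all (fun x => x.2 == None) xs ->
  [/\ uniq (bsubtrees (ch xs)), all (fun b => ~~ isroot b) (bsubtrees (ch xs)) &
      sumn (map (@bout _) (bsubtrees (ch xs))) = (size xs).-1].
Proof.
elim: xs => [|[a o] xs IH] //= /andP[/eqP -> /IH [u a' s]].
rewrite u a' /=; split => //.
  rewrite andbT; apply/negP => /bsub_le /=; lia.
rewrite s; case: xs {u a' s IH} => //.
Qed.

Lemma fcns_leaves (A : eqType) (us : seq (tree A)) :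
  fcns [seq Node (alpha u, None) [::] | u <- us] = ch [seq (alpha u, @None (tree A)) | u <- us].
Proof. by elim: us => //= u us ->. Qed.

Definition intl {A : eqType} (t : tree A) :=
  [seq s <- undup (subtrees t) | 0 < size (children s)].

Lemma hforest_eq (A : eqType) (t : tree A) :
  hdag_forest t = [seq fcns [:: rho' s] | s <- intl t].
Proof. by []. Qed.

Lemma bout_root (A : eqType) (s : tree A) :
  0 < size (children s) -> bout (fcns [:: rho' s]) = 1.
Proof. by case: s => a [|u us]. Qed.

Lemma main_bound (A : eqType) (t : tree A) s : s \in intl t ->
  size (intl t) + (size (children s)).-1 <= hdag_size t.
Proof.
move=> sI.
set C := fcns [seq Node (alpha u, @None (tree A)) [::] | u <- children s].
have [uC rC sC] : [/\ uniq (bsubtrees C), all (fun b => ~~ isroot b) (bsubtrees C) &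
      sumn (map (@bout _) (bsubtrees C)) = (size (children s)).-1].
  rewrite /C fcns_leaves; have [] := @ch_props A [seq (alpha u, @None (tree A)) | u <- children s].
    by apply/allP => x /mapP [u _ ->].
  by rewrite size_map.
have rootE : fcns [:: rho' s] = BNode (inl (label s), Some s) C BEmpty by [].
have hsz : size (hdag_forest t) = size (intl t) by rewrite hforest_eq size_map.
have hsum : sumn (map (@bout _) (hdag_forest t)) = size (intl t).
  have : all (fun s => 0 < size (children s)) (intl t) by exact: filter_all.
  rewrite hforest_eq -map_comp; elim: (intl t) => //= x xs IH /andP [hx hxs].
  by rewrite (IH hxs); case: x hx => a [|u us].
rewrite -hsum -sC -sumn_cat -map_cat /hdag_size /forest_dag_size.
apply: sum_sub.
  rewrite cat_uniq uC andbT; apply/andP; split.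
    rewrite hforest_eq map_inj_in_uniq; first exact/filter_uniq/undup_uniq.
    by move=> x y _ _ [].
  apply/hasP => -[b /(allP rC) /negP nr]; rewrite hforest_eq => /mapP [x _ bE].
  by apply: nr; rewrite bE.
move=> b; rewrite mem_cat => /orP [bF|bC]; apply/flatten_mapP.
  exists b => //; case: b bF => [|*]; last exact: mem_head.
  by rewrite hforest_eq => /mapP [x _].
exists (fcns [:: rho' s]); first by rewrite hforest_eq; apply: (map_f (fun s => fcns [:: rho' s])).
by rewrite rootE /= inE mem_cat bC orbT.
Qed.

Lemma sumn_filter_pos (T : Type) (f : T -> nat) (l : seq T) :
  sumn (map f l) = sumn (map f [seq x <- l | 0 < f x]).
Proof. by elim: l => //= x l IH; case: (posnP (f x)) => [->|] /=; rewrite IH. Qed.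

Lemma sumn_le_size (T : eqType) (f : T -> nat) (l : seq T) X :
  (forall x, x \in l -> f x <= X) -> sumn (map f l) <= size l * X.
Proof.
elim: l => //= x l IH H; rewrite mulSn leq_add ?H ?mem_head //.
by apply: IH => y yl; apply: H; rewrite in_cons yl orbT.
Qed.

Lemma two_le_size (T : eqType) (x y : T) (l : seq T) :
  x \in l -> y \in l -> x != y -> 2 <= size l.
Proof.
move=> xl yl xy.
have := @uniq_leq_size _ [:: x; y] l; rewrite /= inE (negbTE xy) /=.
by apply => // z; rewrite !inE => /orP [/eqP->|/eqP->].
Qed.

Lemma case_lem (A : eqType) (t : tree A) :
  2 <= edges t -> (2 <= size (intl t)) || (2 <= size (children t)).
Proof.
  case: t => a [|c [|c' cs]] //=; last by rewrite orbT.
  move=> He; apply/orP; left.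
  have Hc : 0 < edges c by lia.
  apply: (@two_le_size _ (Node a [:: c]) c) => //.
      by rewrite mem_filter mem_undup /= mem_head.
    rewrite mem_filter mem_undup /= cats0 andbC; apply/andP; split.
      by rewrite in_cons; case: c Hc {He} => ? ? /=; rewrite mem_head orbT.
    by case: c Hc {He} => ? [|? ?].
  apply/eqP => E; have := congr1 (@edges A) E; rewrite /=; lia.
Qed.

Theorem theorem2 (Sigma : finType) (t : tree Sigma) :
  2 <= edges t -> 2 * dag_size t <= hdag_size t ^ 2.
Proof.
move=> He.
have dE : dag_size t = sumn [seq size (children s) | s <- intl t].
  by rewrite /dag_size sumn_filter_pos.
set n := size (intl t); set h := hdag_size t.
have tI : t \in intl t.
  rewrite mem_filter mem_undup; move: He {dE n h}; case: t => a ts /=.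
  by rewrite mem_head andbT; case: ts.
have Hb := @main_bound _ t.
have kt1 : 0 < size (children t) by move: tI; rewrite mem_filter => /andP[].
have hb : forall s, s \in intl t -> size (children s) <= h + 1 - n.
  by move=> s /Hb; lia.
have Hd : dag_size t <= n * (h + 1 - n) by rewrite dE; apply: sumn_le_size.
have hbt := hb _ tI.
have Hcase : (2 <= n) || (2 <= size (children t)) by exact: (@case_lem _ t He).
clearbody n h; clear Hb.
have nh : n <= h.
  move: hbt kt1; set k := size (children t); move=> hbt kt1.
  lia.
have [X hX] : exists X, h + 1 = n + X by exists (h + 1 - n); lia.
rewrite (_ : h + 1 - n = X) in Hd; last by lia.
have X1 : 0 < X by lia.
have HX : (2 <= n) || (2 <= X).
  move: Hcase => /orP [] H; apply/orP; [by left|right].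
  move: hbt hX H; set k := size (children t); lia.
have hE : h = n + X - 1 by lia.
apply: (@leq_trans (2 * (n * X))); first exact: leq_mul.
rewrite hE; case/orP: HX => H2.
  have [Y ->] : exists Y, n = Y + 2 by exists (n - 2); lia.
  case: X X1 {hX Hd hE} => // X' _.
  rewrite (_ : Y + 2 + X'.+1 - 1 = Y + X' + 2); last by lia.
  rewrite expnS expn1; nia.
have [Y ->] : exists Y, X = Y + 2 by exists (X - 2); lia.
case: n {hX Hd hE hb Hcase hbt nh} => [|n'].
  rewrite /=; nia.
rewrite (_ : n'.+1 + (Y + 2) - 1 = n' + Y + 2); last by lia.
rewrite expnS expn1; nia.
Qed.
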